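(* Let $\alpha>0$, let $K\subseteq\mathbb{R}^d$ be a closed convex cone and $P\in\mathbb{R}^{d\times d}$ non-singular, and set $K'=PK=\{Px:x\in K\}$. Let $\mathcal{A}=\{y\in\mathbb{R}^d: x^Ty\le\|Px\|\,\alpha\ \text{for all }x\in K\}$ and $\mathcal{B}=P^T\big(\{\tilde{y}\in\mathbb{R}^d:\|p_{K'}(\tilde{y})\|\le\alpha\}\big)=\{P^T\tilde{y}:\|p_{K'}(\tilde{y})\|\le\alpha\}$. Then $\mathcal{A}=\mathcal{B}$.
   Context: $\|\cdot\|$ is the Euclidean norm. For a closed convex set $C\subset\mathbb{R}^d$ and $y\in\mathbb{R}^d$, the projection $p_C(y)$ is the unique point of $C$ with $\|p_C(y)-y\|=\inf_{x\in C}\|x-y\|$. *)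

(* Defs.v *)
From HB Require Import structures.
From mathcomp Require Import all_boot all_order all_algebra.
From mathcomp Require Import all_classical all_reals all_analysis.
Set Implicit Arguments. Unset Strict Implicit. Unset Printing Implicit Defensive.
Import Order.TTheory GRing.Theory Num.Theory.
Import numFieldNormedType.Exports.
Local Open Scope ring_scope.
Local Open Scope classical_set_scope.

Definition enorm (R : realType) (d : nat) (x : 'cV[R]_d) : R :=
  Num.sqrt (\sum_(i < d) x i 0 ^+ 2).

Definition is_convex_cone (R : realType) (d : nat) (K : set 'cV[R]_d) : Prop :=
  K 0 /\ forall (x y : 'cV[R]_d) (a b : R), K x -> K y -> 0 <= a -> 0 <= b ->
    K (a *: x + b *: y).

Definition is_proj (R : realType) (d : nat) (C : set 'cV[R]_d) (y p : 'cV[R]_d)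
  : Prop := C p /\ forall x, C x -> enorm (p - y) <= enorm (x - y).

(* Main.v *)
Require Import Defs.
From HB Require Import structures.
From mathcomp Require Import all_boot all_order all_algebra.
From mathcomp Require Import all_classical all_reals all_analysis.
From mathcomp Require Import ring lra.
Set Implicit Arguments. Unset Strict Implicit. Unset Printing Implicit Defensive.
Import Order.TTheory GRing.Theory Num.Theory.
Import numFieldNormedType.Exports.
Local Open Scope ring_scope.
Local Open Scope classical_set_scope.

Section S.
Variable R : realType.

Lemma sum_cont (T : topologicalType) (I : Type) (s : seq I) (f : I -> T -> R) :
  (forall i, continuous (f i)) -> continuous (fun x => \sum_(i <- s) f i x).
Proof.
move=> H; elim: s => [|a s IH].
  under eq_fun do rewrite big_nil. exact: cst_continuous.
under eq_fun do rewrite big_cons.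
by move=> x; apply: continuousD; [apply: H| apply: IH].
Qed.

Lemma mx_cont (T : topologicalType) m n (g : T -> 'M[R]_(m,n)) :
  (forall i j, continuous (fun t => g t i j)) -> continuous g.
Proof.
move=> H t; apply/cvg_ballP => e e0.
have: \forall s \near t, forall i j, ball (g t i j) e (g s i j).
  apply: filter_forall => i; apply: filter_forall => j.
  by move: (H i j t) => /cvg_ballP; apply.
apply: filterS => s Hs.
split => //.
Qed.

Variable d : nat.
Implicit Types u v w : 'cV[R]_d.
Definition dot (u v : 'cV[R]_d) : R := \sum_i u i 0 * v i 0.

Lemma dot_ge0 u : 0 <= dot u u.
Proof. by apply: sumr_ge0 => i _; rewrite -expr2 sqr_ge0. Qed.

Lemma dotC u v : dot u v = dot v u.
Proof. by apply: eq_bigr => i _; rewrite mulrC. Qed.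

Lemma dot_comb u v a b : dot (a*:u + b*:v) (a*:u + b*:v) =
  a^+2 * dot u u + 2*a*b*dot u v + b^+2 * dot v v.
Proof.
rewrite /dot !mulr_sumr -!big_split /=; apply: eq_bigr => i _; rewrite !mxE; ring.
Qed.

Lemma dotDr u v w : dot u (v + w) = dot u v + dot u w.
Proof. by rewrite /dot -big_split; apply: eq_bigr => i _; rewrite !mxE mulrDr. Qed.

Lemma dotNr u v : dot u (- v) = - dot u v.
Proof. by rewrite /dot -sumrN; apply: eq_bigr => i _; rewrite !mxE mulrN. Qed.

Lemma dotZl u v a : dot (a *: u) v = a * dot u v.
Proof. by rewrite /dot mulr_sumr; apply: eq_bigr => i _; rewrite !mxE mulrA. Qed.

Lemma trmx_dot (x y : 'cV[R]_d) : (x^T *m y) 0 0 = dot x y.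
Proof. by rewrite mxE; apply: eq_bigr => i _; rewrite mxE. Qed.

Lemma enorm_sq u : enorm u ^+ 2 = dot u u.
Proof.
rewrite /enorm sqr_sqrtr; last by apply: sumr_ge0 => i _; rewrite sqr_ge0.
by apply: eq_bigr => i _; rewrite expr2.
Qed.

Lemma enormE u : enorm u = Num.sqrt (dot u u).
Proof. by rewrite /enorm; congr Num.sqrt; apply: eq_bigr => i _; rewrite expr2. Qed.

Lemma enorm_ge0 u : 0 <= enorm u.
Proof. exact: sqrtr_ge0. Qed.

Lemma dot_eq0 u : dot u u = 0 -> u = 0.
Proof.
move=> /eqP; rewrite psumr_eq0; last by move=> i _; rewrite -expr2 sqr_ge0.
move=> /allP H; apply/matrixP => i j; rewrite ord1 mxE.
by have := H i (mem_index_enum i); rewrite -expr2 sqrf_eq0 => /eqP.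
Qed.

Lemma dot0l v : dot 0 v = 0.
Proof. by rewrite /dot big1 // => i _; rewrite mxE mul0r. Qed.

Lemma CS u v : dot u v <= enorm u * enorm v.
Proof.
have [a0|] := eqVneq (enorm u) 0.
  have : dot u u = 0 by rewrite -enorm_sq a0 expr2 mul0r.
  by move=> /dot_eq0 ->; rewrite dot0l mulr_ge0 ?enorm_ge0.
have [b0|] := eqVneq (enorm v) 0.
  have : dot v v = 0 by rewrite -enorm_sq b0 expr2 mul0r.
  by move=> /dot_eq0 ->; rewrite dotC dot0l mulr_ge0 ?enorm_ge0.
move=> bn an.
have a0 : 0 < enorm u by rewrite lt0r an enorm_ge0.
have b0 : 0 < enorm v by rewrite lt0r bn enorm_ge0.
have := dot_ge0 (enorm v *: u + (- enorm u) *: v).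
rewrite dot_comb -!enorm_sq => H.
have ab0 : 0 < enorm u * enorm v by rewrite mulr_gt0.
nra.
Qed.


Lemma coord_le w i : (w i 0) ^+ 2 <= dot w w.
Proof.
rewrite /dot (bigD1 i) //= -expr2 lerDl; apply: sumr_ge0 => j _.
by rewrite -expr2 sqr_ge0.
Qed.

Lemma dotNN u : dot (- u) (- u) = dot u u.
Proof. by apply: eq_bigr => i _; rewrite !mxE mulrNN. Qed.

Lemma proj_exists (C : set 'cV[R]_d) y : closed C -> C 0 ->
  exists p, C p /\ forall x, C x -> dot (p - y) (p - y) <= dot (x - y) (x - y).
Proof.
move=> Ccl C0.
pose D := dot y y; pose s := D + 1.
have D0 : 0 <= D by apply: dot_ge0.
pose box := [set v : 'rV[R]_d | forall i,
   (`[y i 0 - s, y i 0 + s]%classic : set R) (v ord0 i)].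
have cbox : compact box.
  have := (@rV_compact _ _ (fun i => `[y i 0 - s, y i 0 + s]%classic))
           (fun i => @segment_compact R (y i 0 - s) (y i 0 + s)).
  by move=> H; exact: H.
pose Ct := (fun v : 'rV[R]_d => v^T) @^-1` C.
have cCt : closed Ct.
  apply: preimage_closed => //; move=> v _; apply: mx_cont => i j.
  under eq_fun do rewrite mxE. exact: coord_continuous.
have cS := compact_closedI cbox cCt.
pose f (v : 'rV[R]_d) := dot (v^T - y) (v^T - y).
have fc : continuous f.
  rewrite /f /dot; apply: sum_cont => i.
  under eq_fun do rewrite !mxE.
  have h1 : continuous (fun x : 'rV[R]_d => x 0 i - y i 0).
    move=> v; have := (@continuousB R R^o _ (fun x : 'rV[R]_d => x 0 i) (fun _ => y i 0) v
      (@coord_continuous R 1 d 0 i v) (@cst_continuous _ _ (y i 0) v)).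
    by [].
  move=> v; exact: (continuousM (h1 v) (h1 v)).
have S0 : (box `&` Ct) 0.
  split; last by rewrite /Ct /= trmx0.
  move=> i /=; rewrite mxE in_itv /=.
  have := coord_le y i; rewrite -/D => H.
  rewrite /s; apply/andP; split; nra.
have [c cS' cmin] := compact_EVT_min (ex_intro _ 0 S0) cS
   (continuous_subspaceT fc).
move: (cS'); rewrite inE => -[cb cC].
exists c^T; split => // x Cx.
have fc0 : f c <= D.
  have := cmin 0 (mem_set S0); rewrite /f trmx0 sub0r dotNN //.
have [bx|nbx] := pselect (box x^T).
  have := cmin x^T (mem_set (conj bx (_ : Ct x^T))); rewrite /f trmxK; apply.
  by rewrite /Ct /= trmxK.
move: nbx => /existsNP [i]; rewrite /= mxE in_itv /= => /negP.
have := coord_le (x - y) i; rewrite !mxE => H1 H2.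
apply: (le_trans fc0); apply: le_trans H1.
rewrite /s negb_and -!ltNge in H2; case/orP: H2 => H2; nra.
Qed.


Lemma quad (a b : R) : 0 <= b ->
  (forall t, 0 < t -> t <= 1 -> 0 <= 2 * t * a + t ^+ 2 * b) -> 0 <= a.
Proof.
move=> b0 H; rewrite leNgt; apply/negP => a0.
pose t := - a / (b - a + 1).
have den : 0 < b - a + 1 by lra.
have tpos : 0 < t by rewrite /t divr_gt0 // oppr_gt0.
have tden : t * (b - a + 1) = - a by rewrite /t divfK // gt_eqF.
have t1 : t <= 1 by rewrite /t ler_pdivrMr // mul1r; lra.
have := H t tpos t1.
have : t * b <= - a by nra.
nra.
Qed.

Lemma dot_le_of_enorm u v : enorm u <= enorm v -> dot u u <= dot v v.
Proof. by rewrite !enormE ler_sqrt // dot_ge0. Qed.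

Lemma proj_var (C : set 'cV[R]_d) y p : is_convex_cone C -> is_proj C y p ->
  (forall z, C z -> dot z (y - p) <= 0) /\ dot p (y - p) = 0.
Proof.
move=> [C0 Cc] [Cp Hp].
have key : forall z, C z -> forall t, 0 < t -> t <= 1 ->
    0 <= 2 * t * dot (p - y) z + t ^+ 2 * dot z z.
  move=> z Cz t t0 t1.
  have := dot_le_of_enorm (Hp _ (Cc p z 1 t Cp Cz ler01 (ltW t0))).
  have -> : 1 *: p + t *: z - y = 1 *: (p - y) + t *: z.
    by apply/matrixP => i j; rewrite !mxE; ring.
  rewrite dot_comb expr1n !mul1r; lra.
have yp : forall z, dot z (y - p) = - dot (p - y) z.
  by move=> z; rewrite -[y - p]opprB dotNr dotC.
have H1 : forall z, C z -> dot z (y - p) <= 0.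
  move=> z Cz; rewrite yp oppr_le0; apply: (quad (dot_ge0 z)); exact: key.
split => //; apply/eqP; rewrite eq_le H1 //=.
have : 0 <= - dot (p - y) p.
  apply: (quad (dot_ge0 p)) => t t0 t1.
  have := dot_le_of_enorm (Hp _ (Cc p p (1 - t) 0 Cp Cp (_ : 0 <= 1 - t) (lexx 0))).
  have -> : (1 - t) *: p + 0 *: p - y = 1 *: (p - y) + (- t) *: p.
    by apply/matrixP => i j; rewrite !mxE; ring.
  rewrite dot_comb expr1n !mul1r sqrrN.
  move=> H; have : 0 <= 1 - t by lra.
  move=> ?; lra.
by rewrite yp.
Qed.

End S.

Unset Implicit Arguments.

Theorem mainTheorem17 (R : realType) (d : nat) (alpha : R)
  (K : set 'cV[R]_d) (P : 'M[R]_d) :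
  0 < alpha -> closed K -> is_convex_cone K -> P \in unitmx ->
  let K' := [set P *m x | x in K] in
  [set y : 'cV[R]_d | forall x, K x -> (x^T *m y) 0 0 <= enorm (P *m x) * alpha]
  = [set P^T *m yt | yt in
       [set yt : 'cV[R]_d | exists p, is_proj K' yt p /\ enorm p <= alpha]].
Proof.
move=> a0 Kcl Kc Pu K'.
have K'cone : is_convex_cone K'.
  case: Kc => K0 Kc; split; first by exists 0 => //; rewrite mulmx0.
  move=> _ _ a b [x Kx <-] [z Kz <-] a0' b0'; exists (a*:x + b*:z); first exact: Kc.
  by rewrite mulmxDr !scalemxAr.
have K'cl : closed K'.
  have -> : K' = (fun z => invmx P *m z) @^-1` K.
    rewrite /K'; apply/seteqP; split => z /=.
      by move=> [x Kx <-]; rewrite mulKmx.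
    by move=> Kz; exists (invmx P *m z) => //; rewrite mulKVmx.
  apply: preimage_closed => // z _; apply: mx_cont => i j.
  under eq_fun do rewrite mxE.
  apply: sum_cont => k v.
  exact: (@continuousM R _ (fun=> invmx P i k) (fun z : 'cV[R]_d => z k j) v
     (@cst_continuous _ _ (invmx P i k) v) (@coord_continuous R d 1 k j v)).
apply/seteqP; split => y /=.
- move=> Hy; pose yt := (invmx P)^T *m y.
  have yE : y = P^T *m yt.
    by rewrite /yt mulmxA -trmx_mul mulVmx // trmx1 mul1mx.
  exists yt; last by rewrite -yE.
  have [p [K'p pmin]] := proj_exists yt K'cl K'cone.1.
  have pr : is_proj K' yt p.
    split => // x K'x; rewrite !enormE ler_sqrt ?dot_ge0 //; exact: pmin.
  exists p; split => //.
  have [_ orth] := proj_var K'cone pr.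
  case: (K'p) => x Kx px.
  have := Hy x Kx; rewrite px yE mulmxA -trmx_mul px trmx_dot.
  have -> : dot p yt = dot p p + dot p (yt - p) by rewrite -dotDr addrC subrK.
  rewrite orth addr0 -enorm_sq => H.
  have := enorm_ge0 p; nra.
- move=> [yt [p [pr pa]] <-] x Kx.
  rewrite mulmxA -trmx_mul trmx_dot.
  have [H1 _] := proj_var K'cone pr.
  have Kz : K' (P *m x) by exists x.
  have := H1 _ Kz; have := CS (P *m x) p.
  have -> : dot (P *m x) yt = dot (P *m x) (yt - p) + dot (P *m x) p
    by rewrite -dotDr subrK.
  have := enorm_ge0 (P *m x); have := enorm_ge0 p; nra.
Qed.
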